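(* Let $k\in[K]$ and suppose the OWA weights satisfy $v_1=\dots=v_{k-1}=0$ and $v_k>0$. Let $\hat\pi$ be an optimal solution of \textsc{Min-Quant}$(k)$~$1|prec|\max w_jT_j$, i.e. $\hat\pi\in\Pi$ minimizes the $k$th largest value among $f(\pi,S_1),\dots,f(\pi,S_K)$. Then $\mathrm{OWA}(\hat\pi)\le (1/v_k)\,\mathrm{OWA}(\pi)$ for every $\pi\in\Pi$. Moreover, the bound is tight: for every $K\ge 2$ there is an instance (with $k=1$, $v_i=1/K$ for all $i$, no precedence constraints, unit processing times and unit weights under all scenarios) and an optimal solution $\hat\pi$ of \textsc{Min-Quant}$(1)$ (= \textsc{Min-Max}) such that $\mathrm{OWA}(\hat\pi)=(1/v_1)\min_{\pi\in\Pi}\mathrm{OWA}(\pi)>0$.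
   Context: Single machine scheduling under scenarios. A set of jobs $J=\{1,\dots,n\}$ must be processed nonpreemptively on one machine, all jobs being available at time $0$; jobs may be subject to precedence constraints given by a partial order ($i\rightarrow j$ means job $j$ cannot start before job $i$ is completed). A schedule is a permutation $\pi$ of $J$ respecting the precedence constraints; $\Pi$ denotes the set of all schedules. A scenario set $\Gamma=\{S_1,\dots,S_K\}$, $K>1$, is given; under scenario $S_i$ job $j$ has a nonnegative processing time $p_j(S_i)$, nonnegative due date $d_j(S_i)$ and nonnegative weight $w_j(S_i)$. $C_j(\pi,S_i)$ is the completion time of $j$ in $\pi$ under $S_i$, i.e. the sum of $p_k(S_i)$ over $k=j$ and all jobs $k$ preceding $j$ in $\pi$. The cost of $\pi$ under $S_i$ is $f(\pi,S_i)=\max_{j\in J} w_j(S_i)[C_j(\pi,S_i)-d_j(S_i)]^+$, where $[x]^+=\max\{0,x\}$. OWA criterion: given weights $\pmb v=(v_1,\dots,v_K)$ with $v_i\in[0,1]$ and $\sum_i v_i=1$, and reals $f_1,\dots,f_K$, let $\sigma$ be a permutation of $[K]$ with $f_{\sigma(1)}\ge\dots\ge f_{\sigma(K)}$ and set $\mathrm{owa}_{\pmb v}(f_1,\dots,f_K)=\sum_{i\in[K]}v_if_{\sigma(i)}$. Set $\mathrm{OWA}(\pi)=\mathrm{owa}_{\pmb v}(f(\pi,S_1),\dots,f(\pi,S_K))$. *)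

(* Defs.v *)
From HB Require Import structures.
From mathcomp Require Import all_boot all_order all_algebra all_fingroup.
Set Implicit Arguments. Unset Strict Implicit. Unset Printing Implicit Defensive.
Import Order.TTheory GRing.Theory Num.Theory.
Local Open Scope ring_scope.

(* Jobs are 'I_n, scenarios are 'I_K.  A schedule is a permutation
   s : {perm 'I_n}; s t is the job processed at position t (0-based),
   and (s^-1)%g j is the position of job j. *)

Definition feasible (n : nat) (prec : rel 'I_n) (s : {perm 'I_n}) : Prop :=
  forall i j, prec i j -> (val ((s^-1)%g i) < val ((s^-1)%g j))%N.

Definition strict_partial_order (n : nat) (prec : rel 'I_n) : Prop :=
  (forall i, ~~ prec i i) /\ (forall i j l, prec i j -> prec j l -> prec i l).

Definition completion (R : numDomainType) (n : nat) (p : 'I_n -> R)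
    (s : {perm 'I_n}) (j : 'I_n) : R :=
  \sum_(t < n | (val t <= val ((s^-1)%g j))%N) p (s t).

(* f(pi,S) = max_j w_j [C_j - d_j]^+  (empty max = 0) *)
Definition cost (R : realDomainType) (n : nat) (p d w : 'I_n -> R)
    (s : {perm 'I_n}) : R :=
  \big[Num.max/0]_(j < n) (w j * Num.max (completion p s j - d j) 0).

Definition sorted_desc (R : realDomainType) (K : nat) (f : 'I_K -> R) : seq R :=
  sort (fun x y : R => y <= x) [seq f i | i <- enum 'I_K].

(* OWA: sum_i v_i f_{sigma(i)}, with 0-based index i *)
Definition owa (R : realDomainType) (K : nat) (v f : 'I_K -> R) : R :=
  \sum_(i < K) v i * nth 0 (sorted_desc f) i.

(* the (k+1)-th largest value (k is 0-based) *)
Definition quant (R : realDomainType) (K : nat) (k : nat) (f : 'I_K -> R) : R :=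
  nth 0 (sorted_desc f) k.

Definition costs (R : realDomainType) (n K : nat) (p d w : 'I_K -> 'I_n -> R)
    (s : {perm 'I_n}) : 'I_K -> R :=
  fun i => cost (p i) (d i) (w i) s.

(* Main.v *)
Require Import Defs.
From HB Require Import structures.
From mathcomp Require Import all_boot all_order all_algebra all_fingroup. From mathcomp Require Import lra.
Import Order.TTheory GRing.Theory Num.Theory.
Set Implicit Arguments. Unset Strict Implicit.
Local Open Scope ring_scope.

Section S.
Variable R : realFieldType.
Implicit Types (K : nat).

Lemma size_sd K (f : 'I_K -> R) : size (sorted_desc f) = K.
Proof. by rewrite /sorted_desc size_sort size_map size_enum_ord. Qed.

Lemma sd_sorted K (f : 'I_K -> R) : sorted (fun x y : R => y <= x) (sorted_desc f).
Proof. apply: sort_sorted => x y; exact: le_total. Qed.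

Lemma mem_sd K (f : 'I_K -> R) x : x \in sorted_desc f -> exists i, x = f i.
Proof. by rewrite /sorted_desc mem_sort => /mapP [i _ ->]; exists i. Qed.

Lemma sd_mono K (f : 'I_K -> R) (i j : nat) : (i <= j)%N -> (j < K)%N ->
  nth 0 (sorted_desc f) j <= nth 0 (sorted_desc f) i.
Proof.
move=> ij jK.
apply: (sorted_leq_nth (leT := fun x y : R => y <= x)) => //.
- by move=> a b c /= h1 h2; exact: le_trans h2 h1.
- exact: sd_sorted.
- by rewrite inE size_sd; exact: leq_ltn_trans jK.
- by rewrite inE size_sd.
Qed.

Lemma sd_head K (f : 'I_K -> R) i : f i <= nth 0 (sorted_desc f) 0.
Proof.
have : f i \in sorted_desc f.
  by rewrite /sorted_desc mem_sort; apply: map_f; rewrite mem_enum.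
have := sd_sorted f.
case: (sorted_desc f) => [//|a l] /= /(order_path_min (fun y x z (h1 : y <= x) (h2 : z <= y) => le_trans h2 h1)) hall.
rewrite inE => /orP [/eqP -> //| hin].
by move/allP: hall => /(_ _ hin).
Qed.

Lemma sum_sd K (f : 'I_K -> R) : \sum_(i < K) nth 0 (sorted_desc f) i = \sum_i f i.
Proof.
have -> : \sum_(i < K) nth 0 (sorted_desc f) i = \sum_(x <- sorted_desc f) x.
  by rewrite (big_nth 0) size_sd big_mkord.
rewrite (perm_big _ (permEl (perm_sort _ _))) big_map big_enum /=.
by apply: eq_bigl => i; rewrite inE.
Qed.

Lemma cost_ge0 n (p d w : 'I_n -> R) s : (forall j, 0 <= w j) -> 0 <= cost p d w s.
Proof.
move=> hw; rewrite /cost; elim/big_ind: _ => //.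
- by move=> x y hx hy; rewrite le_max hx.
- by move=> j _; rewrite mulr_ge0 // le_max lexx orbT.
Qed.


Lemma part1 (n K : nat) (prec : rel 'I_n) (p d w : 'I_K -> 'I_n -> R)
     (v : 'I_K -> R) (k : 'I_K) (pihat : {perm 'I_n}) :
     (1 < K)%N ->
     strict_partial_order prec ->
     (forall i j, 0 <= p i j) -> (forall i j, 0 <= d i j) ->
     (forall i j, 0 <= w i j) ->
     (forall i, 0 <= v i <= 1) -> \sum_(i < K) v i = 1 ->
     (forall i : 'I_K, (val i < val k)%N -> v i = 0) -> 0 < v k ->
     feasible prec pihat ->
     (forall pi, feasible prec pi ->
        quant (val k) (costs p d w pihat) <= quant (val k) (costs p d w pi)) ->
     forall pi, feasible prec pi ->
       owa v (costs p d w pihat) <= (v k)^-1 * owa v (costs p d w pi).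
Proof.
move=> _ _ _ _ hw hv hsum hvk vkpos _ hopt pi hpi.
have nonneg : forall (s : {perm 'I_n}) i, (i < K)%N -> 0 <= nth 0 (sorted_desc (costs p d w s)) i.
  move=> s i iK; have : nth 0 (sorted_desc (costs p d w s)) i \in sorted_desc (costs p d w s).
    by apply: mem_nth; rewrite size_sd.
  by move/mem_sd => [j ->]; apply: cost_ge0.
have step1 : owa v (costs p d w pihat) <= quant k (costs p d w pihat).
  rewrite /owa /quant.
  apply: (@le_trans _ _ (\sum_(i < K) v i * nth 0 (sorted_desc (costs p d w pihat)) k)).
    apply: ler_sum => i _.
    case: (ltnP i k) => ik; first by rewrite hvk // !mul0r.
    by apply: ler_wpM2l; [case/andP: (hv i) | apply: sd_mono].
  by rewrite -mulr_suml hsum mul1r.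
have step2 : v k * quant k (costs p d w pi) <= owa v (costs p d w pi).
  rewrite /owa /quant (bigD1 k) //= lerDl; apply: sumr_ge0 => i _.
  by apply: mulr_ge0; [case/andP: (hv i) | apply: nonneg].
apply: (le_trans step1); apply: (le_trans (hopt _ hpi)).
by rewrite ler_pdivlMl.
Qed.
End S.
Ltac dmax := rewrite ?mul1r; repeat match goal with |- context[Num.max ?a ?b] =>
  lazymatch a with context[Num.max _ _] => fail | _ =>
  lazymatch b with context[Num.max _ _] => fail | _ =>
  rewrite (maxEle a b); case: (@leP _ _ a b) => ? end end end.

Section S2.
Variable R : realFieldType.

Definition dd (K : nat) : 'I_K -> 'I_2 -> R :=
  fun i j => if (val i == 0)%N || (val j != 0)%N then 1 else 2%:R.

Lemma compl2 (s : {perm 'I_2}) j :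
  completion (fun _ => (1 : R)) s j = (val ((s^-1)%g j)).+1%:R.
Proof.
rewrite /completion big_mkcond !big_ord_recl big_ord0 /=.
case: ((s^-1)%g j) => [[|[|//]] ?] /=; rewrite /bump /= ?addr0 ?add0r //.
Qed.

Lemma pos2 (s : {perm 'I_2}) :
  ((val ((s^-1)%g ord0) == 0)%N && (val ((s^-1)%g (lift ord0 ord0)) == 1)%N) ||
  ((val ((s^-1)%g ord0) == 1)%N && (val ((s^-1)%g (lift ord0 ord0)) == 0)%N).
Proof.
have hne : (s^-1)%g ord0 != (s^-1)%g (lift ord0 ord0).
  by rewrite (inj_eq (@perm_inj _ _)).
move: hne; rewrite -val_eqE /=.
case: ((s^-1)%g ord0) => [[|[|//]] ?]; case: ((s^-1)%g (lift ord0 ord0)) => [[|[|//]] ?] //.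
Qed.

Lemma cost_formula K (s : {perm 'I_2}) (i : 'I_K) :
  costs (fun _ _ => (1 : R)) (@dd K) (fun _ _ => 1) s i =
  if (val i == 0)%N || (val ((s^-1)%g ord0) == 0)%N then 1 else 0.
Proof.
rewrite /costs /cost !big_ord_recl big_ord0 !compl2 /dd /=.
case/orP: (pos2 s) => /andP [/eqP -> /eqP ->] /=;
case: (val i == 0)%N => /=; dmax; lra.
Qed.

End S2.

Lemma owa_unif (R : realFieldType) K (f : 'I_K -> R) :
  owa (fun _ => K%:R^-1) f = K%:R^-1 * \sum_i f i.
Proof. by rewrite /owa -mulr_sumr sum_sd. Qed.

Lemma part2 (R : realFieldType) : (forall K : nat, (2 <= K)%N ->
     let v : 'I_K -> R := fun _ => K%:R^-1 in
     exists n (d : 'I_K -> 'I_n -> R),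
       let one : 'I_K -> 'I_n -> R := fun _ _ => 1 in
       (forall i j, 0 <= d i j) /\
       exists pihat : {perm 'I_n},
         feasible (fun _ _ => false) pihat /\
         (forall pi, feasible (fun _ _ => false) pi ->
            quant 0 (costs one d one pihat) <= quant 0 (costs one d one pi)) /\
         exists pistar : {perm 'I_n},
           feasible (fun _ _ => false) pistar /\
           (forall pi, feasible (fun _ _ => false) pi ->
              owa v (costs one d one pistar) <= owa v (costs one d one pi)) /\
           0 < owa v (costs one d one pistar) /\
           owa v (costs one d one pihat) = K%:R * owa v (costs one d one pistar)).
Proof.
move=> K hK v; exists 2%N, (@dd R K); cbv zeta.
have K0 : (0 < K)%N by apply: leq_trans hK.
pose i0 : 'I_K := Ordinal K0.
have Kpos : (0 : R) < K%:R by rewrite ltr0n.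
have cf := @cost_formula R K.
split; first by move=> i j; rewrite /dd; case: ifP => _ //; rewrite ler0n.
exists 1%g; split; first by [].
have hat : forall i, costs (fun _ _ => (1:R)) (@dd R K) (fun _ _ => 1) 1%g i = 1.
  by move=> i; rewrite cf invg1 perm1 /= orbT.
split.
  move=> pi _; apply: (@le_trans _ _ 1).
    rewrite /quant.
    have : nth 0 (sorted_desc (costs (fun _ _ => (1:R)) (@dd R K) (fun _ _ => 1) 1%g)) 0
       \in sorted_desc (costs (fun _ _ => (1:R)) (@dd R K) (fun _ _ => 1) 1%g).
      by apply: mem_nth; rewrite size_sd.
    by case/mem_sd => j ->; rewrite hat.
  apply: (@le_trans _ _ (costs (fun _ _ => (1:R)) (@dd R K) (fun _ _ => 1) pi i0)).
    by rewrite cf.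
  exact: sd_head.
pose ps : {perm 'I_2} := tperm ord0 (lift ord0 ord0).
have star : forall i, costs (fun _ _ => (1:R)) (@dd R K) (fun _ _ => 1) ps i =
   if (val i == 0)%N then 1 else 0.
  by move=> i; rewrite cf /ps tpermV tpermL /= orbF.
have sstar : \sum_i costs (fun _ _ => (1:R)) (@dd R K) (fun _ _ => 1) ps i = 1.
  rewrite (bigD1 i0) //= star /= big1 ?addr0 // => i hi.
  rewrite star ifF //; apply/negbTE; move: hi; apply: contra => /eqP h.
  by apply/eqP/val_inj; rewrite /= h.
exists ps; split; first by [].
rewrite !owa_unif sstar; split.
  move=> pi _; rewrite owa_unif; apply: ler_wpM2l; first by rewrite invr_ge0 ler0n.
  rewrite (bigD1 i0) //= cf /= -[X in X <= _]addr0 lerD2l.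
  by apply: sumr_ge0 => i _; apply: cost_ge0 => j.
split; first by rewrite mulr1 invr_gt0.
under eq_bigr do rewrite hat.
rewrite sumr_const card_ord mulr1 mulVf ?mulfV //; by rewrite gt_eqF.
Qed.

Theorem theorem7 (R : realFieldType) :
  (* Part 1: approximation bound *)
  (forall (n K : nat) (prec : rel 'I_n) (p d w : 'I_K -> 'I_n -> R)
     (v : 'I_K -> R) (k : 'I_K) (pihat : {perm 'I_n}),
     (1 < K)%N ->
     strict_partial_order prec ->
     (forall i j, 0 <= p i j) -> (forall i j, 0 <= d i j) ->
     (forall i j, 0 <= w i j) ->
     (forall i, 0 <= v i <= 1) -> \sum_(i < K) v i = 1 ->
     (forall i : 'I_K, (val i < val k)%N -> v i = 0) -> 0 < v k ->
     feasible prec pihat ->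
     (forall pi, feasible prec pi ->
        quant (val k) (costs p d w pihat) <= quant (val k) (costs p d w pi)) ->
     forall pi, feasible prec pi ->
       owa v (costs p d w pihat) <= (v k)^-1 * owa v (costs p d w pi))
  /\
  (* Part 2: tightness, with k = 1 (0-based index 0), v_i = 1/K,
     no precedence constraints, unit processing times and weights *)
  (forall K : nat, (2 <= K)%N ->
     let v : 'I_K -> R := fun _ => K%:R^-1 in
     exists n (d : 'I_K -> 'I_n -> R),
       let one : 'I_K -> 'I_n -> R := fun _ _ => 1 in
       (forall i j, 0 <= d i j) /\
       exists pihat : {perm 'I_n},
         feasible (fun _ _ => false) pihat /\
         (forall pi, feasible (fun _ _ => false) pi ->
            quant 0 (costs one d one pihat) <= quant 0 (costs one d one pi)) /\
         exists pistar : {perm 'I_n},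
           feasible (fun _ _ => false) pistar /\
           (forall pi, feasible (fun _ _ => false) pi ->
              owa v (costs one d one pistar) <= owa v (costs one d one pi)) /\
           0 < owa v (costs one d one pistar) /\
           owa v (costs one d one pihat) = K%:R * owa v (costs one d one pistar)).
Proof. split; [exact: (@part1 R) | exact: part2]. Qed.
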